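(* For every integer $k\geq 1$ and every integer $n\geq 0$, in $\mathbb{Q}(t)$, $$\sum_{i=k2^{n}}^{k2^{n+1}}\frac{1}{B_i(t)B_{i+1}(t)}=\frac{(2-t)\,S_k(t)}{t^{\,n+\lfloor\log_2 k\rfloor+1}B_k(t)}+\frac{1}{t^{\,n+1}B_k(t)}\left(\frac{1}{B_{k2^{n+1}+1}(t)}+1\right),$$ where the sum runs over all integers $i$ with $k2^n\leq i\leq k2^{n+1}$.
   Context: The Stern polynomials $B_n(t)\in\mathbb{Z}[t]$ are defined by $B_0(t)=0$, $B_1(t)=1$, and for $n\geq 1$: $B_{2n}(t)=tB_n(t)$, $B_{2n+1}(t)=B_n(t)+B_{n+1}(t)$. The polynomials $S_n(t)$, $n\ge1$, are defined by $S_1(t)=S_2(t)=0$ and, for $k\geq 1$, $S_{2k}(t)=tS_k(t)$, $S_{2k+1}(t)=S_k(t)+S_{k+1}(t)+t^{\lfloor\log_2 k\rfloor}$. *)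

(* Defs.v *)
From HB Require Import structures.
From mathcomp Require Import all_boot all_order all_algebra.
Set Implicit Arguments. Unset Strict Implicit. Unset Printing Implicit Defensive.
Import Order.TTheory GRing.Theory Num.Theory.
Local Open Scope ring_scope.

(* Fuel-based evaluation of the Stern polynomials; fuel n suffices for B_n. *)
Fixpoint stern_fuel (fuel n : nat) : {poly rat} :=
  match fuel with
  | 0%N => 0
  | f.+1 =>
    if n == 0%N then 0 else if n == 1%N then 1 else
    if odd n then stern_fuel f n./2 + stern_fuel f n./2.+1
    else 'X * stern_fuel f n./2
  end.

Definition stern (n : nat) : {poly rat} := stern_fuel n n.

(* S_n(t), n >= 1 (S_0 is unused; it is set to 0). *)
Fixpoint sternS_fuel (fuel n : nat) : {poly rat} :=
  match fuel with
  | 0%N => 0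
  | f.+1 =>
    if (n <= 2)%N then 0 else
    if odd n then sternS_fuel f n./2 + sternS_fuel f n./2.+1 + 'X ^+ trunc_log 2 n./2
    else 'X * sternS_fuel f n./2
  end.

Definition sternS (n : nat) : {poly rat} := sternS_fuel n n.

Notation Qt := {fraction {poly rat}}.
Definition toQt (p : {poly rat}) : Qt := tofrac p.
Definition tQt : Qt := toQt 'X.

(* Main.v *)
Require Import Defs.
From mathcomp Require Import all_boot all_order all_algebra zify ring.
Import GRing.Theory.
Local Open Scope ring_scope.

Lemma stern_fuel_irr f : forall g n, (n <= f)%N -> (n <= g)%N -> stern_fuel f n = stern_fuel g n.
Proof.
elim: f => [|f IH] [|g] n /= hf hg.
- by [].
- by move: hf; rewrite leqn0 => /eqP ->.
- by move: hg; rewrite leqn0 => /eqP ->.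
case: ifP => // /eqP n0; case: ifP => // /eqP n1.
have hh := odd_double_half n.
case: ifP => od; rewrite od in hh.
- by rewrite (IH g) ?(IH g n./2.+1) //; lia.
- by rewrite (IH g) //; lia.
Qed.

Lemma sternS_fuel_irr f : forall g n, (n <= f)%N -> (n <= g)%N -> sternS_fuel f n = sternS_fuel g n.
Proof.
elim: f => [|f IH] [|g] n /= hf hg.
- by [].
- by move: hf; rewrite leqn0 => /eqP ->.
- by move: hg; rewrite leqn0 => /eqP ->.
case: ifP => // n2.
have hh := odd_double_half n.
case: ifP => od; rewrite od in hh.
- by rewrite (IH g) ?(IH g n./2.+1) //; lia.
- by rewrite (IH g) //; lia.
Qed.

Lemma stern_step f n : stern_fuel f.+1 n = if n == 0%N then 0 else if n == 1%N then 1
  else if odd n then stern_fuel f n./2 + stern_fuel f n./2.+1 else 'X * stern_fuel f n./2.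
Proof. by []. Qed.

Lemma sternS_step f n : sternS_fuel f.+1 n = if (n <= 2)%N then 0
  else if odd n then sternS_fuel f n./2 + sternS_fuel f n./2.+1 + 'X ^+ trunc_log 2 n./2
  else 'X * sternS_fuel f n./2.
Proof. by []. Qed.

Lemma stern_unfold n : stern n = if n == 0%N then 0 else if n == 1%N then 1
  else if odd n then stern n./2 + stern n./2.+1 else 'X * stern n./2.
Proof.
case: n => [//|n]; rewrite /stern stern_step; case: ifP => // n0; case: ifP => // od;
have hh := odd_double_half n.+1; rewrite od in hh; rewrite (_ : (n.+1 == 0%N) = false) //.
- by rewrite (@stern_fuel_irr n ((n.+1)./2)) ?(@stern_fuel_irr n ((n.+1)./2.+1)) //; lia.
- by rewrite (@stern_fuel_irr n ((n.+1)./2)) //; lia.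
Qed.

Lemma sternS_unfold n : sternS n = if (n <= 2)%N then 0
  else if odd n then sternS n./2 + sternS n./2.+1 + 'X ^+ trunc_log 2 n./2
  else 'X * sternS n./2.
Proof.
case: n => [//|n]; rewrite /sternS sternS_step; case: ifP => // n1; case: ifP => // od;
have hh := odd_double_half n.+1; rewrite od in hh.
- by rewrite (@sternS_fuel_irr n ((n.+1)./2)) ?(@sternS_fuel_irr n ((n.+1)./2.+1)) //; lia.
- by rewrite (@sternS_fuel_irr n ((n.+1)./2)) //; lia.
Qed.

Local Notation B i := (toQt (stern i)).
Local Notation S i := (toQt (sternS i)).
Local Notation t := tQt.

Lemma toQtM p q : toQt (p * q) = toQt p * toQt q. Proof. exact: rmorphM. Qed.
Lemma toQtD p q : toQt (p + q) = toQt p + toQt q. Proof. exact: rmorphD. Qed.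
Lemma toQtX p m : toQt (p ^+ m) = toQt p ^+ m. Proof. exact: rmorphXn. Qed.

Lemma stern0 : stern 0 = 0. Proof. by []. Qed.
Lemma stern1 : stern 1 = 1. Proof. by rewrite stern_unfold. Qed.
Lemma sternS1 : sternS 1 = 0. Proof. by rewrite sternS_unfold. Qed.

Lemma B_even j : B (j.*2) = t * B j.
Proof.
case: j => [|j]; first by rewrite stern0 /toQt rmorph0 mulr0.
by rewrite stern_unfold odd_double half_double /= /tQt -toQtM.
Qed.

Lemma B_odd j : B (j.*2.+1) = B j + B j.+1.
Proof.
rewrite stern_unfold /= odd_double /= uphalf_double; case: j => [|j] /=.
  by rewrite stern0 stern1 /toQt rmorph0 add0r.
by rewrite toQtD.
Qed.

Lemma S_even j : S (j.*2) = t * S j.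
Proof.
rewrite sternS_unfold odd_double half_double; case: ifP => h.
  have : (j <= 1)%N by lia.
  by case: j {h} => [|[|]] //= _; rewrite ?sternS1 /toQt rmorph0 mulr0.
by rewrite /tQt -toQtM.
Qed.

Lemma S_odd j : (0 < j)%N -> S (j.*2.+1) = S j + S j.+1 + t ^+ trunc_log 2 j.
Proof.
move=> j0; rewrite sternS_unfold /= odd_double /= uphalf_double ifF; last by lia.
by rewrite !toQtD toQtX.
Qed.

Lemma S_pow m : S (2 ^ m) = 0.
Proof.
elim: m => [|m IH]; first by rewrite expn0 sternS1 /toQt rmorph0.
by rewrite expnS mul2n S_even IH mulr0.
Qed.

Lemma B_pow k m : B (k * 2 ^ m) = t ^+ m * B k.
Proof.
elim: m => [|m IH]; first by rewrite expn0 muln1 expr0 mul1r.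
by rewrite expnS mulnCA mul2n B_even IH exprS mulrA.
Qed.

Lemma stern_eval k : (stern k).[2%:R] = k%:R.
Proof.
elim/ltn_ind: k => k IH; rewrite stern_unfold.
case: ifP => [/eqP ->|k0]; first by rewrite hornerC.
case: ifP => [/eqP ->|k1]; first by rewrite hornerC.
have hh := odd_double_half k.
case: ifP => od; rewrite od in hh.
- rewrite hornerD !IH; try lia.
  by rewrite -natrD; congr (_%:R); lia.
- rewrite hornerM hornerX IH; last by lia.
  by rewrite -natrM; congr (_%:R); lia.
Qed.

Lemma B_neq0 k : (0 < k)%N -> B k != 0.
Proof.
move=> k0; rewrite /toQt tofrac_eq0; apply/eqP => h.
have := stern_eval k; rewrite h horner0 => /eqP; rewrite eq_sym Num.Theory.pnatr_eq0; lia.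
Qed.

Lemma t_neq0 : t != 0.
Proof. by rewrite /tQt /toQt tofrac_eq0 polyX_eq0. Qed.

Lemma c_neq0 : 2%:R - t != 0.
Proof.
have -> : (2%:R - t) = toQt (2%:R - 'X) by rewrite /tQt /toQt rmorphB rmorph_nat.
rewrite /toQt tofrac_eq0; apply/eqP => h.
have := congr1 (fun p => p.[0]) h; rewrite /= !hornerE /= => /eqP.
by rewrite -(natrD _ 1 1) Num.Theory.pnatr_eq0.
Qed.
Import GRing.Theory.
Local Open Scope ring_scope.

Lemma alg_even (F : fieldType) (t a b q q' : F) : t != 0 -> a != 0 -> b != 0 -> a + b != 0 ->
  (2%:R - t) * q' / (t * b) + (t * b)^-1 - ((2%:R - t) * q / (t * a) + (t * a)^-1) = (1 - t) / (t * a * b) ->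
  (2%:R - t) * ((q + q' + 1) / t) / (t * (a + b)) + (t * (a + b))^-1
   - ((2%:R - t) * q / (t * (t * a)) + (t * (t * a))^-1) = (1 - t) / (t * (t * a) * (a + b)).
Proof.
move=> ht ha hb hab H; apply/eqP; rewrite -subr_eq0.
have -> : (2%:R - t) * ((q + q' + 1) / t) / (t * (a + b)) + (t * (a + b))^-1
   - ((2%:R - t) * q / (t * (t * a)) + (t * (t * a))^-1) - (1 - t) / (t * (t * a) * (a + b)) =
   b / (t * (a + b)) * ((2%:R - t) * q' / (t * b) + (t * b)^-1 - ((2%:R - t) * q / (t * a) + (t * a)^-1) - (1 - t) / (t * a * b)).
  by field; rewrite ht ha hb hab.
by rewrite H subrr mulr0.
Qed.

Lemma alg_odd (F : fieldType) (t a b q q' : F) : t != 0 -> a != 0 -> b != 0 -> a + b != 0 ->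
  (2%:R - t) * q' / (t * b) + (t * b)^-1 - ((2%:R - t) * q / (t * a) + (t * a)^-1) = (1 - t) / (t * a * b) ->
  (2%:R - t) * q' / (t * (t * b)) + (t * (t * b))^-1
   - ((2%:R - t) * ((q + q' + 1) / t) / (t * (a + b)) + (t * (a + b))^-1) = (1 - t) / (t * (a + b) * (t * b)).
Proof.
move=> ht ha hb hab H; apply/eqP; rewrite -subr_eq0.
have -> : (2%:R - t) * q' / (t * (t * b)) + (t * (t * b))^-1
   - ((2%:R - t) * ((q + q' + 1) / t) / (t * (a + b)) + (t * (a + b))^-1) - (1 - t) / (t * (a + b) * (t * b)) =
   a / (t * (a + b)) * ((2%:R - t) * q' / (t * b) + (t * b)^-1 - ((2%:R - t) * q / (t * a) + (t * a)^-1) - (1 - t) / (t * a * b)).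
  by field; rewrite ht ha hb hab.
by rewrite H subrr mulr0.
Qed.

Lemma alg_base (F : fieldType) (t : F) : t != 0 ->
  (2%:R - t) * 0 / (t * t) + (t * t)^-1 - ((2%:R - t) * 0 / (t * 1) + (t * 1)^-1) = (1 - t) / (t * 1 * t).
Proof. by move=> ht; field; rewrite ht. Qed.

Lemma alg_pair (F : fieldType) (t a b : F) : t != 0 -> a != 0 -> b != 0 -> a + b != 0 ->
  ((t * a) * (a + b))^-1 + ((a + b) * (t * b))^-1 = (a * b)^-1 / t.
Proof. by move=> ht ha hb hab; field; rewrite ht ha hb hab. Qed.

Lemma alg_Ustep (F : fieldType) (t a b u : F) : t != 0 -> a != 0 -> b != 0 ->
  u - (a * b)^-1 + (a * b)^-1 / t = u + (1 - t) / (t * a * b).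
Proof. by move=> ht ha hb; field; rewrite ht ha hb. Qed.

Lemma alg_final (F : fieldType) (t y x s bk b' : F) : t != 0 -> y != 0 -> x != 0 -> bk != 0 -> b' != 0 ->
  ((2%:R - t) * (s / x) / (t * bk) + (t * bk)^-1) / y + ((t * y) * bk * b')^-1
  = (2%:R - t) * s / ((t * (y * x)) * bk) + ((t * y) * bk)^-1 * (b'^-1 + 1).
Proof. by move=> ht hy hx hb hb'; field; rewrite ht hy hx hb hb'. Qed.

Lemma alg_Ustep2 (F : fieldType) (t a b w : F) : t != 0 -> a != 0 -> b != 0 ->
  w + (a * b)^-1 / t = (a * b)^-1 + w + (1 - t) / (t * a * b).
Proof. by move=> ht ha hb; field; rewrite ht ha hb. Qed.

Local Notation L j := (trunc_log 2 j).
Definition Q k := S k / t ^+ L k.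
Definition G k := (2%:R - t) * Q k / (t * B k) + (t * B k)^-1.


Lemma alg_Qeven (F : fieldType) (t s x : F) : t != 0 -> x != 0 -> t * s / (t * x) = s / x.
Proof. by move=> ht hx; field; rewrite ht hx. Qed.

Lemma alg_Qodd (F : fieldType) (t s1 s2 x : F) : t != 0 -> x != 0 ->
  (s1 + s2 + x) / (t * x) = (s1 / x + s2 / x + 1) / t.
Proof. by move=> ht hx; field; rewrite ht hx. Qed.
Lemma L_double j : (0 < j)%N -> L (j.*2) = (L j).+1.
Proof. exact: trunc_log2_double. Qed.

Lemma L_double1 j : (0 < j)%N -> L (j.*2.+1) = (L j).+1.
Proof. move=> j0; rewrite trunc_log2S /=; last by lia. by rewrite uphalf_double. Qed.

Lemma L_succ j : (0 < j)%N -> L j.+1 = L j \/ (j.+1 = 2 ^ L j.+1)%N.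
Proof.
move=> j0; have h1 := trunc_logP (isT : (1 < 2)%N) (isT : (0 < j.+1)%N).
have h2 := trunc_log_ltn j.+1 (isT : (1 < 2)%N).
case: (ltnP j (2 ^ L j.+1)%N) => h.
  by right; apply/eqP; rewrite eqn_leq h1 h.
left; apply/esym/trunc_log_eq => //; apply/andP; split => //; exact: ltn_trans (ltnSn j) h2.
Qed.

Lemma Q_next j : (0 < j)%N -> S j.+1 / t ^+ L j.+1 = S j.+1 / t ^+ L j.
Proof.
move=> j0; case: (@L_succ j j0) => [-> //|h].
by rewrite h S_pow !mul0r.
Qed.

Lemma Q_even j : (0 < j)%N -> Q (j.*2) = Q j.
Proof.
move=> j0; rewrite /Q S_even L_double // exprS.
have hx : t ^+ L j != 0 by rewrite expf_neq0 // t_neq0.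
exact: alg_Qeven (t_neq0) hx.
Qed.

Lemma Q_odd j : (0 < j)%N -> Q (j.*2.+1) = (Q j + Q j.+1 + 1) / t.
Proof.
move=> j0; rewrite /Q S_odd // L_double1 // (@Q_next j j0).
have hx : t ^+ L j != 0 by rewrite expf_neq0 // t_neq0.
rewrite exprS; exact: alg_Qodd (t_neq0) hx.
Qed.

Lemma toQt0 : toQt 0 = 0. Proof. exact: rmorph0. Qed.
Lemma toQt1 : toQt 1 = 1. Proof. exact: rmorph1. Qed.

Lemma B1 : B 1 = 1. Proof. by rewrite stern1 toQt1. Qed.
Lemma B2 : B 2 = t. Proof. by rewrite -[2%N]/(1.*2)%N B_even B1 mulr1. Qed.
Lemma Q1 : Q 1 = 0. Proof. by rewrite /Q sternS1 toQt0 mul0r. Qed.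
Lemma Q2 : Q 2 = 0. Proof. by rewrite -[2%N]/(1.*2)%N Q_even // Q1. Qed.

Lemma split_nat k : exists j, k = j.*2 \/ k = j.*2.+1.
Proof.
exists k./2; have := odd_double_half k; case: (odd k) => /= h; [right|left]; lia.
Qed.

Lemma D k : (0 < k)%N -> G k.+1 - G k = (1 - t) / (t * B k * B k.+1).
Proof.
elim/ltn_ind: k => k IH k0.
have ht := t_neq0.
case: (ltnP 1 k) => k1; last first.
  have -> : k = 1%N by lia.
  by rewrite /G Q1 Q2 B1 B2; apply: alg_base.
have [j [hj | hj]] := split_nat k; subst k.
- have j0 : (0 < j)%N by lia.
  have := IH j ltac:(lia) j0; rewrite /G => H.
  rewrite Q_odd // Q_even // B_even B_odd.
  have hb : B j.+1 != 0 by apply: B_neq0.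
  have hab : B j + B j.+1 != 0 by rewrite -B_odd B_neq0.
  exact: (@alg_even Qt t (B j) (B j.+1) (Q j) (Q j.+1) ht (@B_neq0 j j0) hb hab H).
- have j0 : (0 < j)%N by lia.
  have := IH j ltac:(lia) j0; rewrite /G => H.
  rewrite -doubleS Q_even // Q_odd // B_even B_odd.
  have hb : B j.+1 != 0 by apply: B_neq0.
  have hab : B j + B j.+1 != 0 by rewrite -B_odd B_neq0.
  exact: (@alg_odd Qt t (B j) (B j.+1) (Q j) (Q j.+1) ht (@B_neq0 j j0) hb hab H).
Qed.

Local Notation f i := ((B i * B i.+1)^-1).
Definition W a b := \sum_(a <= i < b) f i.

Lemma f_pair j : (0 < j)%N -> f (j.*2) + f (j.*2.+1) = f j / t.
Proof.
move=> j0; rewrite -doubleS !B_even B_odd.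
have hb : B j.+1 != 0 by apply: B_neq0.
have hab : B j + B j.+1 != 0 by rewrite -B_odd B_neq0.
exact: (@alg_pair Qt t (B j) (B j.+1) t_neq0 (@B_neq0 j j0) hb hab).
Qed.

Lemma W_double a d : (0 < a)%N -> W (a.*2) ((a + d).*2) = W a (a + d) / t.
Proof.
move=> a0; elim: d => [|d IH].
  by rewrite addn0 /W !big_geq // mul0r.
rewrite addnS doubleS /W big_nat_recr /=; last by lia.
rewrite big_nat_recr /=; last by lia.
rewrite -/(W _ _) IH -addrA f_pair; last by lia.
by rewrite /W big_nat_recr /=; [rewrite mulrDl | lia].
Qed.

Lemma W_pow k n : (0 < k)%N -> W (k * 2 ^ n) (k * 2 ^ n.+1) = W k (k.*2) / t ^+ n.
Proof.
move=> k0; elim: n => [|n IH].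
  by rewrite expn0 muln1 expn1 muln2 expr0 divr1.
have p0 : (0 < k * 2 ^ n)%N by rewrite muln_gt0 k0 expn_gt0.
have e1 : (k * 2 ^ n.+1 = (k * 2 ^ n).*2)%N by rewrite expnS mulnCA mul2n.
have e2 : (k * 2 ^ n.+2 = (k * 2 ^ n + k * 2 ^ n).*2)%N.
  by rewrite (expnS 2 n.+1) mulnCA mul2n e1 addnn.
rewrite e1 e2 W_double // addnn -e1 IH.
by rewrite exprSr invfM mulrA.
Qed.

Lemma U_step k : (0 < k)%N -> W k.+1 (k.+1).*2 = W k (k.*2) + (1 - t) / (t * B k * B k.+1).
Proof.
move=> k0; rewrite /W doubleS big_nat_recr /=; last by lia.
rewrite big_nat_recr /=; last by lia.
rewrite -addrA f_pair // (@big_ltn _ _ _ k); last by lia.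
have hb : B k.+1 != 0 by apply: B_neq0.
exact: (@alg_Ustep2 Qt t (B k) (B k.+1) _ t_neq0 (@B_neq0 k k0) hb).
Qed.

Lemma U_G k : (0 < k)%N -> W k (k.*2) = G k.
Proof.
elim: k => [//|k IH] _.
case: k IH => [|k] IH.
  rewrite /W /= big_nat1 /G Q1 B1 B2.
  by rewrite mulr0 mul0r add0r mul1r mulr1.
rewrite U_step // IH // -D //.
by rewrite addrC subrK.
Qed.

Theorem mainTheorem15 (k n : nat) (hk : (1 <= k)%N) :
  \sum_(k * 2 ^ n <= i < (k * 2 ^ n.+1).+1)
      (toQt (stern i) * toQt (stern i.+1))^-1
  = ((2%:R - tQt) * toQt (sternS k))
      / (tQt ^+ (n + trunc_log 2 k).+1 * toQt (stern k))
    + (tQt ^+ n.+1 * toQt (stern k))^-1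
      * ((toQt (stern (k * 2 ^ n.+1).+1))^-1 + 1).
Proof.
rewrite big_nat_recr /=; last by rewrite leq_mul2l expnS leq_pmull ?expn_gt0 ?orbT.
have := @W_pow k n hk; rewrite {1}/W => ->.
rewrite (@U_G k hk) B_pow /G /Q !exprS exprD.
have ht := t_neq0.
have hy : t ^+ n != 0 by rewrite expf_neq0.
have hx : t ^+ trunc_log 2 k != 0 by rewrite expf_neq0.
have hb' : B (k * 2 ^ n.+1).+1 != 0 by apply: B_neq0.
exact: (@alg_final Qt t (t ^+ n) (t ^+ trunc_log 2 k) (S k) (B k) _ ht hy hx (@B_neq0 k hk) hb').
Qed.
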